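(* In the cylindrical KLRW category $\mathcal C^{cyl}_{\bullet,n,F}$, let $D:\theta\to\theta'$ be a morphism represented by a diagram with exactly one crossing between a red strand and a black strand, and no other crossings and no dots. Then every morphism $\theta\to\theta'$ homogeneous of the same $J$-, $u$-, $\hbar$- and $C$-degrees as $D$ is a scalar multiple of $D$.
   Context: $\mathcal C^{cyl}_{\bullet,n,F}$: for a finite set $F$ of red points on $S^1$, objects are configurations of $n$ black points in $S^1\setminus F$; morphisms are the $\mathbb Z[u,\hbar]$-span of strand diagrams on $S^1\times[0,1]$ (vertical red strands at $F$, black strands possibly carrying dots), composed by stacking, modulo isotopy and the relations: black–black bigon $=0$; red–black bigon $=u\cdot$(black strand with a dot); the two ways of passing two crossing black strands around a red strand differ by $u\hbar\cdot\mathrm{id}$; moving a dot through a black–black crossing changes the diagram by $\hbar\cdot\mathrm{id}$. Gradings: a red–black crossing, a black–black crossing, and a dot have $J$-degrees $1,-2,2$, $u$-degrees $\tfrac12,0,1$, and $\hbar$-degrees $0,1,-1$ respectively. The $C$-degree: fix a point $\varphi\in S^1$ away from red and black points; each time a black strand crosses $\varphi$ from right to left the $C$-degree increases by $1$, and from left to right it decreases by $1$. *)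

(* Defs.v *)
From HB Require Import structures.
From mathcomp Require Import all_boot all_algebra.
Set Implicit Arguments. Unset Strict Implicit. Unset Printing Implicit Defensive.
Import GRing.Theory Num.Theory.

(* An object is read off the cylinder cut open at the base point phi:
   the sequence of colours of the points (true = black, false = red),
   position 0 being immediately to the right of phi and the last position
   immediately to the left of phi. *)
Definition obj := seq bool.

(* object of C^cyl_{bullet,n,F} with #|F| = r red points and n black points *)
Definition is_obj (r n : nat) (s : obj) : bool :=
  (count id s == n) && (count negb s == r).

(* X i    : crossing of the strands at positions i, i+1 (not both red)
   Dot i  : a dot on the black strand at position i
   RotL   : the black strand at position 0 crosses phi from right to left
            (it ends at the last position)
   RotR   : the black strand at the last position crosses phi from left to
            right (it ends at position 0) *)
Inductive gen := X of nat | Dot of nat | RotL | RotR.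

Definition gen_code (g : gen) : nat * nat :=
  match g with X i => (0, i) | Dot i => (1, i) | RotL => (2, 0) | RotR => (3, 0) end.
Definition gen_decode (p : nat * nat) : option gen :=
  match p with
  | (0, i) => Some (X i) | (1, i) => Some (Dot i)
  | (2, _) => Some RotL | (3, _) => Some RotR | _ => None end.
Lemma gen_codeK : pcancel gen_code gen_decode. Proof. by case. Qed.
HB.instance Definition _ := Equality.copy gen (pcan_type gen_codeK).

(* a word = a diagram, read from bottom (first letter) to top *)
Definition word := seq gen.

Definition swap_at (i : nat) (s : obj) : obj :=
  take i s ++ [:: nth false s i.+1; nth false s i] ++ drop i.+2 s.

Definition step (g : gen) (s : obj) : option obj :=
  match g with
  | X i => if (i.+1 < size s) && (nth false s i || nth false s i.+1)
           then Some (swap_at i s) else None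
  | Dot i => if nth false s i then Some s else None
  | RotL => if s is b :: s' then (if b then Some (rcons s' b) else None) else None
  | RotR => if s is b :: s' then
              (if last b s' then Some (last b s' :: belast b s') else None)
            else None
  end.

Fixpoint run (w : word) (s : obj) : option obj :=
  match w with
  | [::] => Some s
  | g :: w' => if step g s is Some s1 then run w' s1 else None
  end.

Local Open Scope ring_scope.
Definition deg := (rat * rat * rat * rat)%type.
Definition deg0 : deg := (0, 0, 0, 0).
Definition dadd (x y : deg) : deg :=
  let '(a, b, c, d) := x in let '(a', b', c', d') := y in
  (a + a', b + b', c + c', d + d').

Definition gdeg (g : gen) (s : obj) : deg :=
  match g with
  | X i => if nth false s i && nth false s i.+1
           then (-2, 0, 1, 0)
           else (1, 2%:R^-1, 0, 0)
  | Dot _ => (2, 1, -1, 0)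
  | RotL => (0, 0, 0, 1)
  | RotR => (0, 0, 0, -1)
  end.

Fixpoint wdeg (w : word) (s : obj) : deg :=
  match w with
  | [::] => deg0
  | g :: w' => dadd (gdeg g s) (if step g s is Some s1 then wdeg w' s1 else deg0)
  end.

(* a term (a, b, w) stands for u^a * hbar^b * w *)
Definition term := (nat * nat * word)%type.
Definition fsum := seq (int * term).

(* degrees of the scalars, forced by homogeneity of the defining relations:
   u has degree (J,u,hbar,C) = (0,0,1,0), hbar has degree (0,1,0,0). *)
Definition tdeg (s : obj) (t : term) : deg :=
  let '(a, b, w) := t in dadd (wdeg w s) (0, b%:R, a%:R, 0).

Definition coef (x : fsum) (t : term) : int := \sum_(p <- x | p.2 == t) p.1.

Definition fscale (k : int) (x : fsum) : fsum := [seq (k * p.1, p.2) | p <- x].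
Definition tmul (t1 t2 : term) : term :=
  ((t1.1.1 + t2.1.1)%N, (t1.1.2 + t2.1.2)%N, t1.2 ++ t2.2).
(* product = vertical stacking: x below, y on top *)
Definition fmul (x y : fsum) : fsum :=
  [seq (p.1 * q.1, tmul p.2 q.2) | p <- x, q <- y].
Definition wsum (w : word) : fsum := [:: (1, (0%N, 0%N, w))].
Definition mon (a b : nat) : fsum := [:: (1, (a, b, [::]))].

Definition scal (c : seq (int * (nat * nat))) (w : word) : fsum :=
  [seq (p.1, (p.2.1, p.2.2, w)) | p <- c].

Definition is_local (g : gen) : bool :=
  match g with X _ | Dot _ => true | _ => false end.
Definition support (g : gen) : seq nat :=
  match g with X i => [:: i; i.+1] | Dot i => [:: i] | _ => [::] end.
Definition is_rot (g : gen) : bool :=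
  match g with RotL | RotR => true | _ => false end.

Inductive basic_rel (s : obj) : fsum -> fsum -> Prop :=
| br_far g1 g2 : is_local g1 -> is_local g2 ->
    ~~ has (fun j => j \in support g1) (support g2) ->
    run [:: g1; g2] s != None -> run [:: g2; g1] s != None ->
    basic_rel s (wsum [:: g1; g2]) (wsum [:: g2; g1])
| br_dot_rb i k k' : (i.+1 < size s)%N ->
    ((k == i) && (k' == i.+1)) || ((k == i.+1) && (k' == i)) ->
    nth false s k -> ~~ nth false s k' ->
    basic_rel s (wsum [:: Dot k; X i]) (wsum [:: X i; Dot k'])
| br_rot_inv1 : head false s -> basic_rel s (wsum [:: RotL; RotR]) (wsum [::])
| br_rot_inv2 : run [:: RotR] s != None -> basic_rel s (wsum [:: RotR; RotL]) (wsum [::])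
(* isotopy on the cylinder: local pieces slide around the cylinder *)
| br_rot_X p : (0 < p)%N -> run [:: X p; RotL] s != None ->
    basic_rel s (wsum [:: X p; RotL]) (wsum [:: RotL; X p.-1])
| br_rot_Dot p : (0 < p)%N -> run [:: Dot p; RotL] s != None ->
    basic_rel s (wsum [:: Dot p; RotL]) (wsum [:: RotL; Dot p.-1])
| br_rot_Dot0 : run [:: Dot 0; RotL] s != None ->
    basic_rel s (wsum [:: Dot 0; RotL]) (wsum [:: RotL; Dot (size s).-1])
| br_bb_bigon i : (i.+1 < size s)%N -> nth false s i -> nth false s i.+1 ->
    basic_rel s (wsum [:: X i; X i]) [::]
| br_rb_bigon i k : (i.+1 < size s)%N -> (k == i) || (k == i.+1) ->
    nth false s k -> nth false s i != nth false s i.+1 ->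
    basic_rel s (wsum [:: X i; X i]) (fmul (mon 1 0) (wsum [:: Dot k]))
| br_dot_bb1 i : (i.+1 < size s)%N -> nth false s i -> nth false s i.+1 ->
    basic_rel s (wsum [:: Dot i; X i]) (wsum [:: X i; Dot i.+1] ++ mon 0 1)
| br_dot_bb2 i : (i.+1 < size s)%N -> nth false s i -> nth false s i.+1 ->
    basic_rel s (wsum [:: Dot i.+1; X i]) (wsum [:: X i; Dot i] ++ fscale (-1) (mon 0 1))
| br_braid i : (i.+2 < size s)%N -> run [:: X i; X i.+1; X i] s != None ->
    ~~ [&& nth false s i, ~~ nth false s i.+1 & nth false s i.+2] ->
    basic_rel s (wsum [:: X i; X i.+1; X i]) (wsum [:: X i.+1; X i; X i.+1])
| br_brb i : (i.+2 < size s)%N ->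
    nth false s i -> ~~ nth false s i.+1 -> nth false s i.+2 ->
    basic_rel s (wsum [:: X i; X i.+1; X i])
                (wsum [:: X i.+1; X i; X i.+1] ++ mon 1 1).

Inductive inspan (th : obj) : fsum -> Prop :=
| sp_rel s s' L R p q a b :
    basic_rel s L R -> run p th = Some s ->
    (forall t, t \in L -> run t.2.2 s = Some s') -> run q s' != None ->
    inspan th (fmul (mon a b) (fmul (wsum p) (fmul L (wsum q))) ++
               fscale (-1) (fmul (mon a b) (fmul (wsum p) (fmul R (wsum q)))))
| sp_add x y : inspan th x -> inspan th y -> inspan th (x ++ y)
| sp_scale k x : inspan th x -> inspan th (fscale k x)
| sp_ext x y : (forall t, coef x t = coef y t) -> inspan th x -> inspan th y.

Definition hom_eq (th : obj) (x y : fsum) : Prop := inspan th (x ++ fscale (-1) y).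

Definition homog (th th' : obj) (d : deg) (x : fsum) : Prop :=
  forall kt, kt \in x -> run kt.2.2 th = Some th' /\ tdeg th kt.2 = d.

(* D is a diagram th -> th' with exactly one crossing, which is red-black,
   no other crossings and no dots (strands may cross phi) *)
Definition one_rb_crossing (th th' : obj) (D : word) : Prop :=
  run D th = Some th' /\
  exists p q i, [/\ D = p ++ X i :: q, all is_rot p, all is_rot q &
    forall s, run p th = Some s -> nth false s i != nth false s i.+1].

(* Main.v *)
Require Import Defs.
From HB Require Import structures.
From mathcomp Require Import all_boot all_algebra.
From mathcomp Require Import ring lra zify.
Import GRing.Theory Num.Theory.
Set Implicit Arguments. Unset Strict Implicit. Unset Printing Implicit Defensive.

Lemma coef_cat (x y : fsum) t : coef (x ++ y) t = (coef x t + coef y t)%R.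
Proof. by rewrite /coef big_cat. Qed.

Lemma coef_fscale k (x : fsum) t : coef (fscale k x) t = (k * coef x t)%R.
Proof. by rewrite /coef /fscale big_map mulr_sumr. Qed.

Lemma coef_cons (k : int) (u : term) (x : fsum) t :
  coef ((k, u) :: x) t = ((if u == t then k else 0) + coef x t)%R.
Proof. rewrite /coef big_cons /=. by case: (u == t); rewrite ?add0r. Qed.

Lemma coef_nil t : coef [::] t = 0%R.
Proof. by rewrite /coef big_nil. Qed.

Definition heq th w1 w2 := hom_eq th (wsum w1) (wsum w2).
Definition eqw th w1 w2 := w1 = w2 \/ heq th w1 w2.

Lemma heq_sym th w1 w2 : heq th w1 w2 -> heq th w2 w1.
Proof.
move=> H; apply: (sp_ext _ (sp_scale (-1) H)) => t.
rewrite /wsum coef_fscale !coef_cat !coef_fscale !coef_cons !coef_nil.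
case: ((0%N, 0%N, w1) == t); case: ((0%N, 0%N, w2) == t); ring.
Qed.

Lemma heq_trans th w1 w2 w3 : heq th w1 w2 -> heq th w2 w3 -> heq th w1 w3.
Proof.
move=> H1 H2; apply: (sp_ext _ (sp_add H1 H2)) => t.
rewrite /wsum !coef_cat !coef_fscale !coef_cons !coef_nil.
case: ((0%N, 0%N, w1) == t); case: ((0%N, 0%N, w2) == t);
  case: ((0%N, 0%N, w3) == t); ring.
Qed.

Lemma eqw_refl th w : eqw th w w. Proof. by left. Qed.
Lemma eqw_sym th w1 w2 : eqw th w1 w2 -> eqw th w2 w1.
Proof. by case=> [->|H]; [left|right; apply: heq_sym]. Qed.
Lemma eqw_trans th w1 w2 w3 : eqw th w1 w2 -> eqw th w2 w3 -> eqw th w1 w3.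
Proof.
case=> [->//|H1]; case=> [<-|H2]; first by right.
by right; apply: heq_trans H1 H2.
Qed.

Lemma run_cat w1 w2 s :
  run (w1 ++ w2) s = if run w1 s is Some s1 then run w2 s1 else None.
Proof.
elim: w1 s => [|g w IH] s //=; case: (step g s) => //.
Qed.

Lemma fmul_single (P l Q : word) :
  fmul (mon 0 0) (fmul (wsum P) (fmul (wsum l) (wsum Q))) = wsum (P ++ l ++ Q).
Proof. by rewrite /fmul /mon /wsum /tmul /=. Qed.

Lemma eqw_rel th P s l r s' Q :
  run P th = Some s -> basic_rel s (wsum l) (wsum r) -> run l s = Some s' ->
  run Q s' != None -> eqw th (P ++ l ++ Q) (P ++ r ++ Q).
Proof.
move=> HP Hb Hl HQ; right.
have H := sp_rel 0 0 Hb HP _ HQ.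
rewrite !fmul_single in H.
apply: H => t; rewrite inE => /eqP -> /=; exact: Hl.
Qed.
Definition rl (s : obj) : obj := if s is b :: s' then rcons s' b else s.
Definition rr (s : obj) : obj := if s is b :: s' then last b s' :: belast b s' else s.

Lemma stepL s : step RotL s = if nth false s 0 then Some (rl s) else None.
Proof. by case: s => [|[] s]. Qed.

Lemma stepR s : step RotR s = if nth false s (size s).-1 then Some (rr s) else None.
Proof. by case: s => [|b s] //=; rewrite -[nth _ _ _]/(nth false (b :: s) (size s)) -[size s]/((size (b :: s)).-1) nth_last. Qed.

Lemma stepX i s : step (X i) s =
  if (i.+1 < size s) && (nth false s i || nth false s i.+1) then Some (swap_at i s) else None.
Proof. by []. Qed.

Lemma size_rl s : size (rl s) = size s.
Proof. by case: s => //= b s; rewrite size_rcons. Qed.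
Lemma size_rr s : size (rr s) = size s.
Proof. by case: s => //= b s; rewrite size_belast. Qed.
Lemma size_swap i s : i.+1 < size s -> size (swap_at i s) = size s.
Proof.
move=> H; rewrite /swap_at size_cat /= size_take size_drop.
case: ifP; lia.
Qed.

Lemma nth_rl s k : 0 < size s -> k < size s ->
  nth false (rl s) k = if k == (size s).-1 then nth false s 0 else nth false s k.+1.
Proof.
case: s => //= b s _ Hk; rewrite nth_rcons.
case: (ltngtP k (size s)) => H1 //; lia.
Qed.

Lemma nth_rr s k : 0 < size s -> k < size s ->
  nth false (rr s) k = if k == 0 then nth false s (size s).-1 else nth false s k.-1.
Proof.
case: s => //= b s _ Hk.
rewrite [in RHS](lastI b s) !nth_rcons size_belast.
case: k Hk => [|k] Hk /=; first by rewrite ltnn eqxx.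
by rewrite ifT //; lia.
Qed.

Lemma nth_swap i s k : i.+1 < size s ->
  nth false (swap_at i s) k =
  if k == i then nth false s i.+1 else if k == i.+1 then nth false s i else nth false s k.
Proof.
move=> H; rewrite /swap_at nth_cat size_take (ifT _ _ (_ : i < size s)); last lia.
case: (ltngtP k i) => H2.
- by rewrite nth_take // ifF //; lia.
- case: (eqVneq k i.+1) => [->|Hk]; first by rewrite (_ : (i.+1 - i = 1)%N) ?eqxx //; lia.
  have -> : (k - i = (k - i - 2).+2)%N by lia.
  rewrite /= nth_drop. congr nth; lia.
- by subst; rewrite subnn.
Qed.

Lemma rr_rl s : nth false s 0 -> rr (rl s) = s.
Proof.
case: s => //= b s _; case: s => //= c s.
by rewrite last_rcons belast_rcons.
Qed.

Lemma rl_rr s : nth false s (size s).-1 -> rl (rr s) = s.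
Proof. by case: s => //= b s _; rewrite -lastI. Qed.

Ltac solve_nth :=
  repeat match goal with |- context [if ?b then _ else _] => case: (boolP b) => /= ? end;
  first [ reflexivity | lia | (congr (nth _ _ _); lia) ].

Lemma rl_swap s j : j.+2 < size s -> rl (swap_at j.+1 s) = swap_at j (rl s).
Proof.
move=> H; apply: (@eq_from_nth _ false).
  by rewrite size_rl !size_swap ?size_rl //; lia.
move=> k; rewrite size_rl size_swap // => Hk.
rewrite nth_rl ?size_swap //; try lia.
rewrite nth_swap ?size_rl //; try lia.
rewrite !nth_swap //; try lia.
rewrite !nth_rl //; try lia.
solve_nth. all: rewrite ?size_rl ?size_rr; lia.
Qed.

Lemma rr_swap s j : j.+2 < size s -> rr (swap_at j s) = swap_at j.+1 (rr s).
Proof.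
move=> H; apply: (@eq_from_nth _ false).
  by rewrite size_rr !size_swap ?size_rr //; lia.
move=> k; rewrite size_rr size_swap; last lia. move=> Hk.
rewrite nth_rr ?size_swap //; try lia.
rewrite nth_swap ?size_rr //; try lia.
rewrite !nth_swap //; try lia.
rewrite !nth_rr //; try lia.
solve_nth. all: rewrite ?size_rl ?size_rr; lia.
Qed.

Lemma swapK s j : j.+1 < size s -> swap_at j (swap_at j s) = s.
Proof.
move=> H; apply: (@eq_from_nth _ false); first by rewrite !size_swap.
move=> k; rewrite !size_swap // => Hk.
rewrite !nth_swap ?size_swap //. solve_nth.
Qed.

Lemma run_cons g w s : run (g :: w) s = if step g s is Some s1 then run w s1 else None.
Proof. by []. Qed.
Lemma run_nil s : run [::] s = Some s. Proof. by []. Qed.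

Lemma run_step g w s s1 : step g s = Some s1 -> run (g :: w) s = run w s1.
Proof. by move=> /= ->. Qed.
Lemma stepL_some s : nth false s 0 -> step RotL s = Some (rl s).
Proof. by rewrite stepL => ->. Qed.
Lemma stepR_some s : nth false s (size s).-1 -> step RotR s = Some (rr s).
Proof. by rewrite stepR => ->. Qed.
Lemma stepX_some i s : i.+1 < size s -> nth false s i || nth false s i.+1 ->
  step (X i) s = Some (swap_at i s).
Proof. by rewrite stepX => -> ->. Qed.

Lemma head_nth s : head false s = nth false s 0. Proof. by case: s. Qed.

Lemma cancelLR th P s Q : run P th = Some s -> nth false s 0 -> run Q s != None ->
  eqw th (P ++ [:: RotL; RotR] ++ Q) (P ++ Q).
Proof.
move=> HP Hs HQ.
have Hsz : 0 < size s by move: Hs; clear; case: s.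
have -> : P ++ Q = P ++ [::] ++ Q by [].
apply: (eqw_rel HP _ _ HQ); first by apply: br_rot_inv1; rewrite head_nth.
rewrite (run_step _ (stepL_some Hs)) (run_step _ (stepR_some _)) ?rr_rl //.
by rewrite size_rl nth_rl // ?eqxx //; lia.
Qed.

Lemma cancelRL th P s Q : run P th = Some s -> nth false s (size s).-1 -> run Q s != None ->
  eqw th (P ++ [:: RotR; RotL] ++ Q) (P ++ Q).
Proof.
move=> HP Hs HQ.
have Hsz : 0 < size s by move: Hs; clear; case: s.
have -> : P ++ Q = P ++ [::] ++ Q by [].
apply: (eqw_rel HP _ _ HQ); first by apply: br_rot_inv2; rewrite run_cons stepR Hs.
rewrite (run_step _ (stepR_some Hs)) (run_step _ (stepL_some _)) ?rl_rr //.
by rewrite nth_rr // ?eqxx //; lia.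
Qed.

Lemma eqXL th P s p s' Q : run P th = Some s -> 0 < p -> run [:: X p; RotL] s = Some s' ->
  run Q s' != None -> eqw th (P ++ [:: X p; RotL] ++ Q) (P ++ [:: RotL; X p.-1] ++ Q).
Proof.
move=> HP Hp Hr HQ; apply: (eqw_rel HP _ Hr HQ).
by apply: br_rot_X => //; rewrite Hr.
Qed.

Fixpoint net (w : word) : int :=
  match w with
  | [::] => 0%R
  | RotL :: w' => (net w' + 1)%R
  | RotR :: w' => (net w' - 1)%R
  | _ :: w' => net w'
  end.

Definition mono (c : int) : word :=
  match c with Posz n => nseq n RotL | Negz n => nseq n.+1 RotR end.

Lemma net_cat w1 w2 : net (w1 ++ w2) = (net w1 + net w2)%R.
Proof. elim: w1 => [|[] w IH] /=; rewrite ?add0r ?IH //; ring. Qed.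

Lemma net_nseqL n : net (nseq n RotL) = Posz n.
Proof. elim: n => //= n ->; by rewrite -addn1 PoszD. Qed.
Lemma net_nseqR n : net (nseq n RotR) = (- Posz n)%R.
Proof. elim: n => //= n ->; rewrite -addn1 PoszD; ring. Qed.

Lemma net_mono c : net (mono c) = c.
Proof. case: c => n; first exact: net_nseqL. exact: (net_nseqR n.+1). Qed.

Lemma all_rot_mono c : all is_rot (mono c).
Proof. by case: c => n; rewrite all_nseq orbT. Qed.

Lemma monoL c : (0 <= c)%R -> mono (c + 1) = RotL :: mono c.
Proof. by case: c => // n _; rewrite -PoszD addn1. Qed.

Lemma monoR c : (c <= 0)%R -> mono (c - 1) = RotR :: mono c.
Proof.
case: c => [[|n]|n] // _.
by rewrite !NegzE -opprD -PoszD addn1 -NegzE.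
Qed.

Lemma monoLR c : (c < 0)%R -> mono c = RotR :: mono (c + 1).
Proof.
move=> H; have H' : (c + 1 <= 0)%R by lia.
by rewrite -(monoR H') addrK.
Qed.

Lemma monoRL c : (0 < c)%R -> mono c = RotL :: mono (c - 1).
Proof.
move=> H; have H' : (0 <= c - 1)%R by lia.
by rewrite -(monoL H') subrK.
Qed.

Lemma run_cons_inv g w s s' : run (g :: w) s = Some s' ->
  exists s1, step g s = Some s1 /\ run w s1 = Some s'.
Proof. rewrite run_cons; case: (step g s) => // s1 H; by exists s1. Qed.

Lemma stepL_inv s s1 : step RotL s = Some s1 -> nth false s 0 /\ s1 = rl s.
Proof. by rewrite stepL; case: ifP => // H [<-]. Qed.
Lemma stepR_inv s s1 : step RotR s = Some s1 -> nth false s (size s).-1 /\ s1 = rr s.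
Proof. by rewrite stepR; case: ifP => // H [<-]. Qed.
Lemma stepX_inv i s s1 : step (X i) s = Some s1 ->
  [/\ i.+1 < size s, nth false s i || nth false s i.+1 & s1 = swap_at i s].
Proof. rewrite stepX; case: ifP => // /andP [H1 H2] [<-]; by split. Qed.

Lemma run_P_rcons th P g s s1 : run P th = Some s -> step g s = Some s1 ->
  run (rcons P g) th = Some s1.
Proof. by move=> HP Hg; rewrite -cats1 run_cat HP run_cons Hg. Qed.

Lemma some_neq (s : obj) : Some s != None. Proof. by []. Qed.

Lemma reduce th w : forall P s s' Q, all is_rot w -> run P th = Some s ->
  run w s = Some s' -> run Q s' != None ->
  eqw th (P ++ w ++ Q) (P ++ mono (net w) ++ Q) /\ run (mono (net w)) s = Some s'.
Proof.
elim: w => [|g w IH] P s s' Q.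
  by move=> _ HP [<-] HQ; split; [apply: eqw_refl|].
case: g => [i|i||] Hw HP /run_cons_inv [s1 [Hg Hr]] HQ; move: Hw => /= Hw; try discriminate.
- have [Hs E1] := stepL_inv Hg; subst s1.
  have [E Hm] := IH (rcons P RotL) _ _ _ Hw (run_P_rcons HP Hg) Hr HQ.
  rewrite !cat_rcons in E.
  case: (boolP (0 <= net w)%R) => Hm0.
  + rewrite monoL //; split => //; by rewrite (run_step _ Hg).
  + have {}Hm0 : (net w < 0)%R by lia.
    rewrite (monoLR Hm0) in E Hm.
    have [s2 [H2 H3]] := run_cons_inv Hm.
    have [_ E2] := stepR_inv H2; rewrite E2 rr_rl // in H3.
    split => //; apply: (eqw_trans E).
    have -> : P ++ [:: RotL, RotR & mono (net w + 1) ++ Q] =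
              P ++ [:: RotL; RotR] ++ (mono (net w + 1) ++ Q) by [].
    apply: (cancelLR HP Hs); by rewrite run_cat H3.
- have [Hs E1] := stepR_inv Hg; subst s1.
  have [E Hm] := IH (rcons P RotR) _ _ _ Hw (run_P_rcons HP Hg) Hr HQ.
  rewrite !cat_rcons in E.
  case: (boolP (net w <= 0)%R) => Hm0.
  + rewrite monoR //; split => //; by rewrite (run_step _ Hg).
  + have {}Hm0 : (0 < net w)%R by lia.
    rewrite (monoRL Hm0) in E Hm.
    have [s2 [H2 H3]] := run_cons_inv Hm.
    have [_ E2] := stepL_inv H2; rewrite E2 rl_rr // in H3.
    split => //; apply: (eqw_trans E).
    have -> : P ++ [:: RotR, RotL & mono (net w - 1) ++ Q] =
              P ++ [:: RotR; RotL] ++ (mono (net w - 1) ++ Q) by [].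
    apply: (cancelRL HP Hs); by rewrite run_cat H3.
Qed.

Lemma size_step g s s1 : step g s = Some s1 -> size s1 = size s.
Proof.
case: g => [i|i||] H.
- by have [H1 _ ->] := stepX_inv H; rewrite size_swap.
- by move: H => /=; case: ifP => // _ [<-].
- by have [_ ->] := stepL_inv H; rewrite size_rl.
- by have [_ ->] := stepR_inv H; rewrite size_rr.
Qed.

Lemma size_run w s s' : run w s = Some s' -> size s' = size s.
Proof.
elim: w s => [|g w IH] s; first by move=> [<-].
by move/run_cons_inv => [s1 [H1 H2]]; rewrite (IH _ H2) (size_step H1).
Qed.

Lemma neq_or (b1 b2 : bool) : b1 != b2 -> b1 || b2.
Proof. by case: b1; case: b2. Qed.

Lemma pushL1 th P s j Q : run P th = Some s -> nth false s 0 -> j.+2 < size s ->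
  nth false (rl s) j != nth false (rl s) j.+1 ->
  run Q (swap_at j (rl s)) != None ->
  eqw th (P ++ [:: RotL; X j] ++ Q) (P ++ [:: X j.+1; RotL] ++ Q).
Proof.
move=> HP Hs Hj Hrb HQ.
have Hsz : 0 < size s by lia.
rewrite !nth_rl // in Hrb; try lia. rewrite !ifF in Hrb; try lia.
apply: eqw_sym; apply: (eqXL HP _ _ HQ) => //.
rewrite (run_step _ (stepX_some _ _)) //; last exact: neq_or.
rewrite (run_step _ (stepL_some _)) ?rl_swap //.
by rewrite nth_swap //; rewrite !ifF //; lia.
Qed.

Lemma pushR1 th P s k Q : run P th = Some s -> nth false s (size s).-1 -> k.+2 < size s ->
  nth false (rr s) k.+1 != nth false (rr s) k.+2 ->
  run Q (swap_at k.+1 (rr s)) != None ->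
  eqw th (P ++ [:: RotR; X k.+1] ++ Q) (P ++ [:: X k; RotR] ++ Q).
Proof.
move=> HP Hs Hk Hrb HQ.
have Hsz : 0 < size s by lia.
rewrite !nth_rr // in Hrb; try lia. rewrite /= in Hrb.
have E1 : step (X k) s = Some (swap_at k s).
  by apply: stepX_some; [lia | exact: neq_or].
have E2 : step RotR (swap_at k s) = Some (rr (swap_at k s)).
  by apply: stepR_some; rewrite size_swap ?nth_swap; try lia; rewrite !ifF //; lia.
rewrite rr_swap // in E2.
have E3 : step RotR s = Some (rr s) by apply: stepR_some.
have E4 : step (X k.+1) (rr s) = Some (swap_at k.+1 (rr s)).
  apply: stepX_some; rewrite ?size_rr //; apply: neq_or; rewrite !nth_rr //; try lia.
have E5 : step RotL (swap_at k.+1 (rr s)) = Some (rl (swap_at k.+1 (rr s))).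
  apply: stepL_some; rewrite nth_swap ?size_rr //= nth_rr //.
have H0 : nth false (swap_at k.+1 (rr s)) 0.
  by rewrite nth_swap ?size_rr //= nth_rr //.
apply: eqw_sym.
have HQ1 : run ([:: X k; RotR] ++ Q) s != None.
  by rewrite run_cat (run_step _ E1) (run_step _ E2) run_nil.
apply: (eqw_trans (eqw_sym (cancelRL HP Hs HQ1))).
have -> : P ++ [:: RotR; RotL] ++ [:: X k; RotR] ++ Q =
  rcons P RotR ++ [:: RotL; X k] ++ (RotR :: Q) by rewrite cat_rcons.
have HP' := run_P_rcons HP E3.
apply: (eqw_trans (eqw_sym (eqXL (p := k.+1) HP' _ _ _))) => //.
  by rewrite (run_step _ E4) (run_step _ E5) run_nil.
  rewrite (run_step _ (stepR_some _)) ?rr_rl //.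
  by rewrite size_rl size_swap ?size_rr; try lia; rewrite nth_rl ?size_swap ?size_rr; try lia;
     rewrite eqxx.
have -> : rcons P RotR ++ [:: X k.+1; RotL] ++ RotR :: Q =
  (P ++ [:: RotR; X k.+1]) ++ [:: RotL; RotR] ++ Q by rewrite cat_rcons -catA.
have -> : P ++ [:: RotR; X k.+1] ++ Q = (P ++ [:: RotR; X k.+1]) ++ Q by rewrite catA.
apply: (cancelLR _ H0 HQ).
by rewrite run_cat HP (run_step _ E3) (run_step _ E4).
Qed.

Lemma run_nseqL_cons a s sa : run (nseq a.+1 RotL) s = Some sa ->
  nth false s 0 /\ run (nseq a RotL) (rl s) = Some sa.
Proof. move/run_cons_inv=> [s1 [H1 H2]]; have [Hs E] := stepL_inv H1; subst s1; by split. Qed.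

Lemma run_nseqR_cons a s sa : run (nseq a.+1 RotR) s = Some sa ->
  nth false s (size s).-1 /\ run (nseq a RotR) (rr s) = Some sa.
Proof. move/run_cons_inv=> [s1 [H1 H2]]; have [Hs E] := stepR_inv H1; subst s1; by split. Qed.

Lemma pushL th a : forall P s sa j Q, run P th = Some s -> run (nseq a RotL) s = Some sa ->
  j.+1 < size sa -> nth false sa j != nth false sa j.+1 -> run Q (swap_at j sa) != None ->
  (exists j', [/\ eqw th (P ++ nseq a RotL ++ X j :: Q) (P ++ X j' :: nseq a RotL ++ Q),
     j'.+1 < size s, nth false s j' != nth false s j'.+1 &
     run (nseq a RotL) (swap_at j' s) = Some (swap_at j sa)])
  \/ [/\ 0 < a,
     eqw th (P ++ nseq a RotL ++ X j :: Q)
            (P ++ RotL :: X (size s).-2 :: nseq a.-1 RotL ++ Q),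
     nth false s 0, 1 < size s &
     nth false (rl s) (size s).-2 != nth false (rl s) (size s).-1 /\
     run (nseq a.-1 RotL) (swap_at (size s).-2 (rl s)) = Some (swap_at j sa)].
Proof.
elim: a => [|a IH] P s sa j Q HP Ha Hj Hrb HQ.
  case: Ha => Es; subst sa; left; exists j; split => //; exact: eqw_refl.
have [Hs Ha'] := run_nseqL_cons Ha.
have Hsz := size_run Ha'; rewrite size_rl in Hsz.
have HP' := run_P_rcons HP (stepL_some Hs).
have [[j' [E Hj' Hrb' Hr']]|[Ha0 E Hs' Hsz2 [Hrb' Hr']]] := IH _ _ _ _ _ HP' Ha' Hj Hrb HQ.
- rewrite !cat_rcons in E. rewrite size_rl in Hj'.
  case: (ltnP j'.+2 (size s)) => Hj2.
  + left; exists j'.+1; split.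
    * apply: (eqw_trans E).
      have -> : P ++ [:: RotL, X j' & nseq a RotL ++ Q] =
                P ++ [:: RotL; X j'] ++ (nseq a RotL ++ Q) by [].
      have -> : P ++ X j'.+1 :: nseq a.+1 RotL ++ Q =
                P ++ [:: X j'.+1; RotL] ++ (nseq a RotL ++ Q) by [].
      apply: (pushL1 HP Hs Hj2 Hrb'); by rewrite run_cat Hr'.
    * by [].
    * by move: Hrb'; rewrite !nth_rl; try lia; rewrite !ifF //; lia.
    * have E6 : step RotL (swap_at j'.+1 s) = Some (swap_at j' (rl s)).
        rewrite stepL_some ?rl_swap //.
        by rewrite nth_swap //; try lia; rewrite !ifF //; lia.
      by rewrite (run_step _ E6).
  + right; have Ej : j' = (size s).-2 by lia.
    have Hs2 : 1 < size s by lia.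
    subst j'; split => //; split => //.
    by rewrite (_ : (size s).-1 = (size s).-2.+1) //; lia.
- exfalso; rewrite size_rl in Hrb' Hsz2.
  have A1 : nth false (rl (rl s)) (size s).-2 = nth false s 0.
    rewrite nth_rl ?size_rl; try lia. rewrite ifF; last lia.
    rewrite nth_rl; try lia. by rewrite ifT; last lia.
  have A2 : nth false (rl (rl s)) (size s).-1 = nth false (rl s) 0.
    by rewrite nth_rl ?size_rl; try lia; rewrite eqxx.
  by move: Hrb'; rewrite A1 A2 Hs Hs'.
Qed.

Lemma pushR th a : forall P s sa j Q, run P th = Some s -> run (nseq a RotR) s = Some sa ->
  j.+1 < size sa -> nth false sa j != nth false sa j.+1 -> run Q (swap_at j sa) != None ->
  (exists j', [/\ eqw th (P ++ nseq a RotR ++ X j :: Q) (P ++ X j' :: nseq a RotR ++ Q),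
     j'.+1 < size s, nth false s j' != nth false s j'.+1 &
     run (nseq a RotR) (swap_at j' s) = Some (swap_at j sa)])
  \/ [/\ 0 < a,
     eqw th (P ++ nseq a RotR ++ X j :: Q)
            (P ++ RotR :: X 0 :: nseq a.-1 RotR ++ Q),
     nth false s (size s).-1, 1 < size s &
     nth false (rr s) 0 != nth false (rr s) 1 /\
     run (nseq a.-1 RotR) (swap_at 0 (rr s)) = Some (swap_at j sa)].
Proof.
elim: a => [|a IH] P s sa j Q HP Ha Hj Hrb HQ.
  case: Ha => Es; subst sa; left; exists j; split => //; exact: eqw_refl.
have [Hs Ha'] := run_nseqR_cons Ha.
have Hsz := size_run Ha'; rewrite size_rr in Hsz.
have HP' := run_P_rcons HP (stepR_some Hs).
have [[j' [E Hj' Hrb' Hr']]|[Ha0 E Hs' Hsz2 [Hrb' Hr']]] := IH _ _ _ _ _ HP' Ha' Hj Hrb HQ.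
- rewrite !cat_rcons in E. rewrite size_rr in Hj'.
  case: j' E Hj' Hrb' Hr' => [|k] E Hj' Hrb' Hr'.
  + right; split => //; lia.
  + left; exists k; split.
    * apply: (eqw_trans E).
      have -> : P ++ [:: RotR, X k.+1 & nseq a RotR ++ Q] =
                P ++ [:: RotR; X k.+1] ++ (nseq a RotR ++ Q) by [].
      have -> : P ++ X k :: nseq a.+1 RotR ++ Q =
                P ++ [:: X k; RotR] ++ (nseq a RotR ++ Q) by [].
      apply: (pushR1 HP Hs Hj' Hrb'); by rewrite run_cat Hr'.
    * lia.
    * by move: Hrb'; rewrite !nth_rr; try lia.
    * have E6 : step RotR (swap_at k s) = Some (swap_at k.+1 (rr s)).
        rewrite stepR_some ?rr_swap //.
        by rewrite size_swap ?nth_swap //; try lia; rewrite !ifF //; lia.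
      by rewrite (run_step _ E6).
- exfalso; rewrite size_rr in Hsz2.
  have A1 : nth false (rr (rr s)) 0 = nth false (rr s) (size s).-1.
    by rewrite nth_rr ?size_rr; try lia.
  have A2 : nth false (rr (rr s)) 1 = nth false s (size s).-1.
    by rewrite nth_rr ?size_rr /=; try lia; rewrite nth_rr //; lia.
  by move: Hrb'; rewrite A1 A2 Hs; rewrite size_rr in Hs'; rewrite Hs'.
Qed.

Definition is_nf (th : obj) (w : word) : Prop :=
  (exists j c, [/\ w = X j :: mono c, j.+1 < size th & nth false th j != nth false th j.+1])
  \/ (exists c, [/\ w = [:: RotL, X (size th).-2 & mono c], nth false th 0, 1 < size th &
        nth false (rl th) (size th).-2 != nth false (rl th) (size th).-1])
  \/ (exists c, [/\ w = [:: RotR, X 0 & mono c], nth false th (size th).-1, 1 < size th &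
        nth false (rr th) 0 != nth false (rr th) 1]).

Lemma run_cat_inv w1 w2 s s' : run (w1 ++ w2) s = Some s' ->
  exists s1, run w1 s = Some s1 /\ run w2 s1 = Some s'.
Proof. rewrite run_cat; case: (run w1 s) => // s1 H; by exists s1. Qed.

Lemma all_rot_cat w1 w2 : all is_rot w1 -> all is_rot w2 -> all is_rot (w1 ++ w2).
Proof. by rewrite all_cat => -> ->. Qed.

Lemma all_rot_nseqL a : all is_rot (nseq a RotL). Proof. by rewrite all_nseq orbT. Qed.
Lemma all_rot_nseqR a : all is_rot (nseq a RotR). Proof. by rewrite all_nseq orbT. Qed.

Lemma nf_exists th p j q th' : all is_rot p -> all is_rot q ->
  run (p ++ X j :: q) th = Some th' ->
  (forall s, run p th = Some s -> nth false s j != nth false s j.+1) ->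
  exists w, [/\ eqw th (p ++ X j :: q) w, net w = (net p + net q)%R,
     run w th = Some th' & is_nf th w].
Proof.
move=> Hp Hq Hr Hrb.
have [sp [Hsp Hr2]] := run_cat_inv Hr.
have [s2 [Hs2 Hq']] := run_cons_inv Hr2.
have [Hj _ Es2] := stepX_inv Hs2; subst s2.
have Hrbj := Hrb _ Hsp.
have Hqn : run (X j :: q) sp != None by rewrite Hr2.
have [E1 Hm] := reduce (P := [::]) Hp (erefl _) Hsp Hqn.
rewrite /= in E1.
case Enp: (net p) E1 Hm => [a|n] E1 Hm.
- have HQ : run q (swap_at j sp) != None by rewrite Hq'.
  have [[j' [E2 Hj' Hrb' Hr']]|[Ha0 E2 Hs0 Hsz [Hrb' Hr']]] :=
    pushL (P := [::]) (erefl _) Hm Hj Hrbj HQ; rewrite /= in E2.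
  + have Hu : run (nseq a RotL ++ q) (swap_at j' th) = Some th' by rewrite run_cat Hr'.
    have HP1 : run [:: X j'] th = Some (swap_at j' th).
      by rewrite (run_step _ (stepX_some Hj' (neq_or Hrb'))).
    have [E3 Hm3] := reduce (Q := [::]) (all_rot_cat (all_rot_nseqL a) Hq) HP1 Hu (some_neq _).
    rewrite /= !cats0 in E3.
    exists (X j' :: mono (net (nseq a RotL ++ q))); split.
    * exact: (eqw_trans E1 (eqw_trans E2 E3)).
    * by rewrite /= net_mono net_cat net_nseqL.
    * by rewrite (run_step _ (stepX_some Hj' (neq_or Hrb'))).
    * by left; exists j', (net (nseq a RotL ++ q)); split.
  + have Hu : run (nseq a.-1 RotL ++ q) (swap_at (size th).-2 (rl th)) = Some th'
      by rewrite run_cat Hr'.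
    have S1 : step RotL th = Some (rl th) by apply: stepL_some.
    have S2 : step (X (size th).-2) (rl th) = Some (swap_at (size th).-2 (rl th)).
      have Ei : (size th).-2.+1 = (size th).-1 by lia.
      apply: stepX_some; last by rewrite Ei; exact: neq_or.
      by rewrite size_rl; lia.
    have HP1 : run [:: RotL; X (size th).-2] th = Some (swap_at (size th).-2 (rl th)).
      by rewrite (run_step _ S1) (run_step _ S2).
    have [E3 Hm3] := reduce (Q := [::]) (all_rot_cat (all_rot_nseqL a.-1) Hq) HP1 Hu (some_neq _).
    rewrite /= !cats0 in E3.
    exists [:: RotL, X (size th).-2 & mono (net (nseq a.-1 RotL ++ q))]; split.
    * exact: (eqw_trans E1 (eqw_trans E2 E3)).
    * rewrite /= net_mono net_cat net_nseqL; lia.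
    * by rewrite (run_step _ S1) (run_step _ S2).
    * by right; left; exists (net (nseq a.-1 RotL ++ q)); split.
- have HQ : run q (swap_at j sp) != None by rewrite Hq'.
  have [[j' [E2 Hj' Hrb' Hr']]|[Ha0 E2 Hs0 Hsz [Hrb' Hr']]] :=
    pushR (P := [::]) (erefl _) Hm Hj Hrbj HQ; rewrite /= in E2.
  + have Hu : run (nseq n.+1 RotR ++ q) (swap_at j' th) = Some th' by rewrite run_cat Hr'.
    have HP1 : run [:: X j'] th = Some (swap_at j' th).
      by rewrite (run_step _ (stepX_some Hj' (neq_or Hrb'))).
    have [E3 Hm3] := reduce (Q := [::]) (all_rot_cat (all_rot_nseqR n.+1) Hq) HP1 Hu (some_neq _).
    rewrite /= !cats0 in E3.
    exists (X j' :: mono (net (nseq n.+1 RotR ++ q))); split.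
    * exact: (eqw_trans E1 (eqw_trans E2 E3)).
    * rewrite /= net_mono net_cat net_nseqR NegzE; lia.
    * by rewrite (run_step _ (stepX_some Hj' (neq_or Hrb'))).
    * by left; exists j', (net (nseq n.+1 RotR ++ q)); split.
  + have Hu : run (nseq n RotR ++ q) (swap_at 0 (rr th)) = Some th'
      by rewrite run_cat Hr'.
    have S1 : step RotR th = Some (rr th) by apply: stepR_some.
    have S2 : step (X 0) (rr th) = Some (swap_at 0 (rr th)).
      apply: stepX_some; last exact: neq_or.
      by rewrite size_rr; lia.
    have HP1 : run [:: RotR; X 0] th = Some (swap_at 0 (rr th)).
      by rewrite (run_step _ S1) (run_step _ S2).
    have [E3 Hm3] := reduce (Q := [::]) (all_rot_cat (all_rot_nseqR n) Hq) HP1 Hu (some_neq _).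
    rewrite /= !cats0 in E3.
    exists [:: RotR, X 0 & mono (net (nseq n RotR ++ q))]; split.
    * exact: (eqw_trans E1 (eqw_trans E2 E3)).
    * rewrite /= net_mono net_cat net_nseqR NegzE; lia.
    * by rewrite (run_step _ S1) (run_step _ S2).
    * by right; right; exists (net (nseq n RotR ++ q)); split.
Qed.

Lemma run_inj_rot w : all is_rot w -> forall x y z,
  run w x = Some z -> run w y = Some z -> x = y.
Proof.
elim: w => [|g w IH]; first by move=> _ x y z [->] [->].
move=> /andP [Hg Hw] x y z /run_cons_inv [x1 [Hx1 Hx]] /run_cons_inv [y1 [Hy1 Hy]].
case: g Hg Hx1 Hy1 => [i|i||] // _ Hx1 Hy1.
- have [Hx0 Ex] := stepL_inv Hx1; have [Hy0 Ey] := stepL_inv Hy1; subst x1 y1.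
  by rewrite -(rr_rl Hx0) -(rr_rl Hy0) (IH Hw _ _ _ Hx Hy).
- have [Hx0 Ex] := stepR_inv Hx1; have [Hy0 Ey] := stepR_inv Hy1; subst x1 y1.
  by rewrite -(rl_rr Hx0) -(rl_rr Hy0) (IH Hw _ _ _ Hx Hy).
Qed.

Lemma mono_inj c x y z : run (mono c) x = Some z -> run (mono c) y = Some z -> x = y.
Proof. exact: run_inj_rot (all_rot_mono c) x y z. Qed.

Lemma mono_step c x y z : run (mono c) y = Some z -> run (mono (c + 1)) x = Some z ->
  y = rl x.
Proof.
case: (boolP (0 <= c)%R) => Hc.
  rewrite monoL // => Hy /run_cons_inv [x1 [Hx1 Hx]].
  have [_ E] := stepL_inv Hx1; subst x1; exact: mono_inj Hy Hx.
have {}Hc : (c < 0)%R by lia.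
rewrite {1}(monoLR Hc) => /run_cons_inv [y1 [Hy1 Hy]] Hx.
have [Hy0 E] := stepR_inv Hy1; subst y1.
by rewrite -(mono_inj Hy Hx) rl_rr.
Qed.

Lemma swap_inj th j1 j2 : j1.+1 < size th -> j2.+1 < size th ->
  nth false th j1 != nth false th j1.+1 -> nth false th j2 != nth false th j2.+1 ->
  swap_at j1 th = swap_at j2 th -> j1 = j2.
Proof.
move=> H1 H2 R1 R2 E.
case: (ltngtP j1 j2) => H; last done.
- move: R1; have := congr1 (fun s => nth false s j1) E.
  rewrite !nth_swap // eqxx.
  have -> : (j1 == j2) = false by lia.
  have -> : (j1 == j2.+1) = false by lia.
  by move=> ->; rewrite eqxx.
- move: R2; have := congr1 (fun s => nth false s j2) E.
  rewrite !nth_swap // eqxx.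
  have -> : (j2 == j1) = false by lia.
  have -> : (j2 == j1.+1) = false by lia.
  by move=> <-; rewrite eqxx.
Qed.

Lemma mono_ft c z : run (mono c) [:: false; true] = Some z -> c = 0%R \/ c = (-1)%R.
Proof. by case: c => [[|[|k]]|[|k]] //= _; [left|right]. Qed.

Lemma mono_tf c z : run (mono c) [:: true; false] = Some z -> c = 0%R \/ c = 1%R.
Proof. by case: c => [[|[|[|k]]]|[|k]] //= _; [left|right]. Qed.

Lemma nth_rlT s k :
  nth false (rl s) k = if k == (size s).-1 then nth false s 0 else nth false s k.+1.
Proof.
case: (posnP (size s)) => Hs.
  by case: s Hs => //=; rewrite !nth_nil; case: ifP.
case: (ltnP k (size s)) => Hk; first exact: nth_rl.
rewrite nth_default ?size_rl // ifF; last lia.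
by rewrite nth_default //; lia.
Qed.

Lemma nth_rrT s k :
  nth false (rr s) k = if k == 0 then nth false s (size s).-1
                       else if k < size s then nth false s k.-1 else false.
Proof.
case: (posnP (size s)) => Hs.
  by case: s Hs => //=; rewrite !nth_nil; case: ifP.
case: (ltnP k (size s)) => Hk; first by rewrite nth_rr //; case: (k == 0).
by rewrite nth_default ?size_rr // ifF; lia.
Qed.

Ltac szl := rewrite ?size_rl ?size_rr ?size_swap; lia.
Ltac nsimp := repeat first
  [ rewrite nth_swap; [|try szl]
  | rewrite nth_rlT
  | rewrite nth_rrT
  | rewrite size_rl | rewrite size_rr | rewrite size_swap; [|try szl] ].

Lemma test_n th j : 2 < size th -> 0 < j -> j.+1 < size th ->
  nth false (swap_at (size th).-2 (rl th)) (size th).-1 = nth false th (size th).-1 /\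
  nth false (rl (swap_at j th)) (size th).-1 = nth false th 0.
Proof. move=> *; split; nsimp; solve_nth. Qed.

Lemma run_A th j c th' : run (X j :: mono c) th = Some th' ->
  run (mono c) (swap_at j th) = Some th'.
Proof. by move/run_cons_inv => [s1 [/stepX_inv [_ _ ->] H]]. Qed.

Lemma run_B th i c th' : run [:: RotL, X i & mono c] th = Some th' ->
  run (mono c) (swap_at i (rl th)) = Some th'.
Proof. by move/run_cons_inv => [s1 [/stepL_inv [_ ->] /run_A H]]. Qed.

Lemma run_C th i c th' : run [:: RotR, X i & mono c] th = Some th' ->
  run (mono c) (swap_at i (rr th)) = Some th'.
Proof. by move/run_cons_inv => [s1 [/stepR_inv [_ ->] /run_A H]]. Qed.

Lemma contra_AB th j c c' th' : j.+1 < size th -> nth false th j != nth false th j.+1 ->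
  nth false th 0 -> 1 < size th ->
  nth false (rl th) (size th).-2 != nth false (rl th) (size th).-1 ->
  run (mono c) (swap_at j th) = Some th' ->
  run (mono c') (swap_at (size th).-2 (rl th)) = Some th' -> c = (c' + 1)%R -> False.
Proof.
move=> Hj Rj H0 HN Rb H1 H2 Ec; subst c.
have E := mono_step H2 H1.
case: (eqVneq (size th) 2) => HN2.
  case: th Hj Rj H0 HN Rb H1 H2 E HN2 => [|a [|b [|]]] //= Hj Rj H0 HN Rb H1 H2 E _.
  move: H0 Rj Rb H1 H2 E; case: a => //; case: b => // _ Rj Rb H1 H2 E.
  case: j Hj Rj H1 E => [|//] Hj Rj H1 E.
  have := mono_ft H1; have := mono_tf H2; lia.
have L3 : nth false (rl th) (size th).-2 = nth false th (size th).-1 by nsimp; solve_nth.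
have L4 : nth false (rl th) (size th).-1 = nth false th 0 by nsimp; solve_nth.
rewrite L3 L4 in Rb.
case: (posnP j) => Hj0.
- subst j.
  have L1 : nth false (swap_at (size th).-2 (rl th)) (size th).-2 = nth false th 0
    by nsimp; solve_nth.
  have L2 : nth false (rl (swap_at 0 th)) (size th).-2 = nth false th (size th).-1
    by nsimp; solve_nth.
  by move: L1; rewrite E L2 => L1; rewrite L1 eqxx in Rb.
- have L1 : nth false (swap_at (size th).-2 (rl th)) (size th).-1 = nth false th (size th).-1
    by nsimp; solve_nth.
  have L2 : nth false (rl (swap_at j th)) (size th).-1 = nth false th 0
    by nsimp; solve_nth.
  by move: L1; rewrite E L2 => L1; rewrite L1 eqxx in Rb.
Qed.

Lemma contra_AC th j c c' th' : j.+1 < size th -> nth false th j != nth false th j.+1 ->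
  nth false th (size th).-1 -> 1 < size th ->
  nth false (rr th) 0 != nth false (rr th) 1 ->
  run (mono c) (swap_at j th) = Some th' ->
  run (mono c') (swap_at 0 (rr th)) = Some th' -> c' = (c + 1)%R -> False.
Proof.
move=> Hj Rj H0 HN Rb H1 H2 Ec; subst c'.
have E := mono_step H1 H2.
case: (eqVneq (size th) 2) => HN2.
  case: th Hj Rj H0 HN Rb H1 H2 E HN2 => [|a [|b [|]]] //= Hj Rj H0 HN Rb H1 H2 E _.
  move: H0 Rj Rb H1 H2 E; case: b => //; case: a => // _ Rj Rb H1 H2 E.
  case: j Hj Rj H1 E => [|//] Hj Rj H1 E.
  have := mono_tf H1; have := mono_ft H2; lia.
have L3 : nth false (rr th) 0 = nth false th (size th).-1 by nsimp; solve_nth.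
have L4 : nth false (rr th) 1 = nth false th 0 by nsimp; solve_nth.
rewrite L3 L4 in Rb.
case: (ltnP j.+2 (size th)) => Hj2.
- have L1 : nth false (swap_at j th) (size th).-1 = nth false th (size th).-1
    by nsimp; solve_nth.
  have L2 : nth false (rl (swap_at 0 (rr th))) (size th).-1 = nth false th 0
    by nsimp; solve_nth.
 
  by move: L1; rewrite E L2 => L1; rewrite L1 eqxx in Rb.
- have L1 : nth false (swap_at j th) 0 = nth false th 0 by nsimp; solve_nth.
  have L2 : nth false (rl (swap_at 0 (rr th))) 0 = nth false th (size th).-1
    by nsimp; solve_nth.
  by move: L1; rewrite E L2 => L1; rewrite L1 eqxx in Rb.
Qed.

Lemma net_X j w : net (X j :: w) = net w. Proof. by []. Qed.
Lemma net_L w : net (RotL :: w) = (net w + 1)%R. Proof. by []. Qed.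
Lemma net_R w : net (RotR :: w) = (net w - 1)%R. Proof. by []. Qed.

Lemma nf_unique th th' w1 w2 : is_nf th w1 -> is_nf th w2 ->
  run w1 th = Some th' -> run w2 th = Some th' -> net w1 = net w2 -> w1 = w2.
Proof.
have BC : nth false th 0 -> nth false th (size th).-1 -> 1 < size th ->
    nth false (rr th) 0 != nth false (rr th) 1 -> False.
  move=> H0 H1 HN Rb.
  have L3 : nth false (rr th) 0 = nth false th (size th).-1 by nsimp; solve_nth.
  have L4 : nth false (rr th) 1 = nth false th 0 by nsimp; solve_nth.
  by move: Rb; rewrite L3 L4 H0 H1.
case=> [[j1 [c1 [-> Hj1 R1]]]|[[c1 [-> B01 BN1 Rb1]]|[c1 [-> C01 CN1 Rc1]]]];
case=> [[j2 [c2 [-> Hj2 R2]]]|[[c2 [-> B02 BN2 Rb2]]|[c2 [-> C02 CN2 Rc2]]]];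
rewrite ?net_X ?net_L ?net_R ?net_X ?net_mono => H1 H2 Ec.
- move/run_A: H1 => H1; move/run_A: H2 => H2; subst c2.
  by rewrite (swap_inj Hj1 Hj2 R1 R2 (mono_inj H1 H2)).
- exfalso; apply: (contra_AB Hj1 R1 B02 BN2 Rb2 (run_A H1) (run_B H2) Ec).
- exfalso; apply: (contra_AC Hj1 R1 C02 CN2 Rc2 (run_A H1) (run_C H2)); lia.
- exfalso; apply: (contra_AB Hj2 R2 B01 BN1 Rb1 (run_A H2) (run_B H1) (esym Ec)).
- by have -> : c1 = c2 by lia.
- exfalso; exact: BC.
- exfalso; apply: (contra_AC Hj2 R2 C01 CN1 Rc1 (run_A H2) (run_C H1)); lia.
- exfalso; exact: BC.
- by have -> : c1 = c2 by lia.
Qed.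

Lemma core th th' p1 j1 q1 p2 j2 q2 :
  all is_rot p1 -> all is_rot q1 -> all is_rot p2 -> all is_rot q2 ->
  run (p1 ++ X j1 :: q1) th = Some th' -> run (p2 ++ X j2 :: q2) th = Some th' ->
  (forall s, run p1 th = Some s -> nth false s j1 != nth false s j1.+1) ->
  (forall s, run p2 th = Some s -> nth false s j2 != nth false s j2.+1) ->
  net (p1 ++ X j1 :: q1) = net (p2 ++ X j2 :: q2) ->
  eqw th (p1 ++ X j1 :: q1) (p2 ++ X j2 :: q2).
Proof.
move=> Hp1 Hq1 Hp2 Hq2 Hr1 Hr2 R1 R2 En.
have [w1 [E1 N1 W1 F1]] := nf_exists Hp1 Hq1 Hr1 R1.
have [w2 [E2 N2 W2 F2]] := nf_exists Hp2 Hq2 Hr2 R2.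
rewrite !net_cat !net_X in En.
have Ew := nf_unique F1 F2 W1 W2 (etrans N1 (etrans En (esym N2))).
subst w2; exact: (eqw_trans E1 (eqw_sym E2)).
Qed.

Fixpoint cnt (w : word) (s : obj) : nat * nat * nat :=
  match w with
  | [::] => (0, 0, 0)
  | g :: w' =>
    let c := if step g s is Some s1 then cnt w' s1 else (0, 0, 0) in
    match g with
    | X i => if nth false s i && nth false s i.+1 then (c.1.1, c.1.2.+1, c.2)
             else (c.1.1.+1, c.1.2, c.2)
    | Defs.Dot _ => (c.1.1, c.1.2, c.2.+1)
    | _ => c
    end
  end.

Definition degf (c : nat * nat * nat) (n : int) : deg :=
  ((c.1.1%:R - 2 * c.1.2%:R + 2 * c.2%:R)%R, (c.1.1%:R / 2 + c.2%:R)%R,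
   (c.1.2%:R - c.2%:R)%R, (n%:~R)%R).

Lemma wdeg_formula w : forall s, run w s != None -> wdeg w s = degf (cnt w s) (net w).
Proof.
elim: w => [|g w IH] s.
  by move=> _; rewrite /degf /deg0 /=; congr (_, _, _, _); ring.
rewrite run_cons; case Hg: (step g s) => [s1|] // Hr.
have {}IH := IH _ Hr.
rewrite /= Hg IH /dadd /degf.
case: g Hg => [i|i||] Hg /=.
- case: (nth false s i && nth false s i.+1) => /=; congr (_, _, _, _); rewrite ?natrS; ring.
- congr (_, _, _, _); rewrite ?natrS; ring.
- congr (_, _, _, _); rewrite ?rmorphD /=; ring.
- congr (_, _, _, _); rewrite ?rmorphB /=; ring.
Qed.

Lemma cnt_cons g w s : cnt (g :: w) s =
    let c := if step g s is Some s1 then cnt w s1 else (0, 0, 0) in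
    match g with
    | X i => if nth false s i && nth false s i.+1 then (c.1.1, c.1.2.+1, c.2)
             else (c.1.1.+1, c.1.2, c.2)
    | Defs.Dot _ => (c.1.1, c.1.2, c.2.+1)
    | _ => c
    end.
Proof. by []. Qed.

Lemma cnt0 w : forall s, run w s != None -> cnt w s = (0, 0, 0) -> all is_rot w.
Proof.
elim: w => [|g w IH] s //.
rewrite run_cons; case Hg: (step g s) => [s1|] // Hr.
rewrite cnt_cons Hg /=; case: g Hg => [i|i||] Hg.
- by case: (_ && _).
- by [].
- exact: IH.
- exact: IH.
Qed.

Lemma cnt1 w : forall s, run w s != None -> cnt w s = (1, 0, 0) ->
  exists p j q, [/\ w = p ++ X j :: q, all is_rot p, all is_rot q &
    forall sp, run p s = Some sp -> nth false sp j != nth false sp j.+1].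
Proof.
elim: w => [|g w IH] s //.
rewrite run_cons; case Hg: (step g s) => [s1|] // Hr.
rewrite cnt_cons Hg /=; case: g Hg => [i|i||] Hg.
- case Hb: (_ && _) => //= Hc.
  exists [::], i, w; split => //.
    apply: (cnt0 Hr); move: Hc; case: (cnt w s1) => [[a b] d] /=; case: a => //.
    by case: b => //; case: d.
  move=> sp [<-]; have [_ Ho _] := stepX_inv Hg.
  by move: Hb Ho; case: (nth false s i); case: (nth false s i.+1).
- by [].
- move=> Hc; have [p [j [q [-> Hp Hq R]]]] := IH _ Hr Hc.
  exists (RotL :: p), j, q; split => // sp; rewrite run_cons Hg; exact: R.
- move=> Hc; have [p [j [q [-> Hp Hq R]]]] := IH _ Hr Hc.
  exists (RotR :: p), j, q; split => // sp; rewrite run_cons Hg; exact: R.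
Qed.

Lemma cnt_rot q s : all is_rot q -> cnt q s = (0, 0, 0).
Proof.
elim: q s => [|g q IH] s // /andP [Hg Hq]; rewrite cnt_cons.
case: g Hg => [i|i||] // _; case: (step _ s) => [s1|] //; exact: IH.
Qed.

Lemma cnt_shape p i q s : all is_rot p -> all is_rot q ->
  run (p ++ X i :: q) s != None ->
  (forall sp, run p s = Some sp -> nth false sp i != nth false sp i.+1) ->
  cnt (p ++ X i :: q) s = (1, 0, 0).
Proof.
elim: p s => [|g p IH] s.
  move=> _ Hq Hr R; rewrite cat0s in Hr *.
  have R0 := R s (erefl _).
  rewrite cnt_cons.
  have -> : nth false s i && nth false s i.+1 = false.
    by move: R0; case: (nth false s i); case: (nth false s i.+1).
  by case: (step (X i) s) => [s1|] //; rewrite cnt_rot.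
move=> /andP [Hg Hp] Hq; rewrite cat_cons run_cons; case Hs: (step g s) => [s1|] // Hr R.
rewrite cnt_cons Hs /=.
have H1 := IH s1 Hp Hq Hr.
have {}H1 : cnt (p ++ X i :: q) s1 = (1, 0, 0).
  apply: H1 => sp Hsp; apply: R; by rewrite run_cons Hs.
by case: g Hg Hs R Hr => [j|j||] // _ _ _ _; rewrite H1.
Qed.

Lemma assemble th D (f : fsum) : inspan th [::] ->
  (forall kt, kt \in f -> exists w, kt.2 = (0%N, 0%N, w) /\ eqw th w D) ->
  inspan th (f ++ fscale (-1) [:: (\sum_(kt <- f) kt.1, (0%N, 0%N, D))]%R).
Proof.
move=> Z; elim: f => [|[k t] f IH] Hf.
  apply: (sp_ext _ Z) => u; rewrite /= !coef_cons coef_nil big_nil.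
  by case: (_ == u); rewrite ?mulr0 ?addr0.
have [w [Et Hw]] := Hf _ (mem_head _ _); rewrite /= in Et; subst t.
have {}IH : inspan th (f ++ fscale (-1) [:: (\sum_(kt <- f) kt.1, (0%N, 0%N, D))]%R).
  by apply: IH => kt H; apply: Hf; rewrite inE H orbT.
case: Hw => [Ew|Hw].
  subst w; apply: (sp_ext _ IH) => u.
  rewrite !coef_cat /fscale /= !coef_cons !coef_nil big_cons /=.
  case: ((0%N, 0%N, D) == u); ring.
apply: (sp_ext _ (sp_add (sp_scale k Hw) IH)) => u.
rewrite /wsum !coef_cat /fscale /= !coef_cons !coef_nil big_cons /=.
case: ((0%N, 0%N, D) == u); case: ((0%N, 0%N, w) == u); ring.
Qed.

Theorem lemma2p2 (r n : nat) (th th' : obj) (D : word) (f : fsum) :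
  is_obj r n th -> is_obj r n th' ->
  one_rb_crossing th th' D ->
  homog th th' (tdeg th (0%N, 0%N, D)) f ->
  exists c : seq (int * (nat * nat)), hom_eq th f (scal c D).
Proof.
move=> _ _ [HD [p [q [i [ED Hp Hq R]]]]] Hf; subst D.
have [sp [Hsp Hr2]] := run_cat_inv HD.
have [s2 [Hs2 _]] := run_cons_inv Hr2.
have [Hi Ho Es2] := stepX_inv Hs2; subst s2.
have Rsp := R _ Hsp.
have Z : inspan th [::].
  pose k := if nth false sp i then i else i.+1.
  have Hk : nth false sp k by rewrite /k; case: ifP => // H; move: Ho; rewrite H.
  have Hk2 : (k == i) || (k == i.+1) by rewrite /k; case: ifP => _; rewrite eqxx ?orbT.
  have Hb := br_rb_bigon Hi Hk2 Hk Rsp.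
  have Hrun : forall t, t \in wsum [:: X i; X i] -> run t.2.2 sp = Some sp.
    move=> t; rewrite inE => /eqP ->; change (run [:: X i; X i] sp = Some sp).
    rewrite (run_step _ (stepX_some Hi Ho)) (run_step _ (stepX_some _ _)) ?swapK //.
      by rewrite size_swap.
    by rewrite !nth_swap // eqxx ifF ?eqxx //; [rewrite orbC | lia].
  have Hx := sp_rel 0 0 Hb Hsp Hrun (q := [::]) (some_neq _).
  apply: (sp_ext _ (sp_scale 0 Hx)) => t.
  by rewrite coef_fscale mul0r coef_nil.
exists [:: (\sum_(kt <- f) kt.1, (0%N, 0%N))]%R.
rewrite /hom_eq /scal /=.
apply: (assemble Z) => [[k [[a b] w]]] Hin.
have [Hw Hdeg] := Hf _ Hin.
have Hw' : run w th = Some th' := Hw.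
have Hdeg' : dadd (wdeg w th) (0%R, b%:R, a%:R, 0%R)%R =
             dadd (wdeg (p ++ X i :: q) th) (0%R, 0%:R, 0%:R, 0%R)%R := Hdeg.
rewrite !wdeg_formula ?Hw' ?HD // (cnt_shape Hp Hq) ?HD // in Hdeg'.
case E: (cnt w th) Hdeg' => [[r0 bb] d] Hdeg'.
rewrite /dadd /degf /= in Hdeg'. case: Hdeg' => e1 e2 e3 e4.
have Hu : ((r0 + 2 * d + 2 * b)%N%:R = 1 :> rat)%R.
  rewrite !natrD; lra.
move/eqP: Hu; rewrite pnatr_eq1 => /eqP Hu.
have Hd : d = 0%N by lia.
have Hb : b = 0%N by lia.
have Hr0 : r0 = 1%N by lia.
subst d b r0.
have Hv : ((bb + a)%N%:R = 0 :> rat)%R.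
  rewrite !natrD; lra.
move/eqP: Hv; rewrite pnatr_eq0 => /eqP Hv.
have Ha : a = 0%N by lia.
have Hbb : bb = 0%N by lia.
subst a bb.
have En : net w = net (p ++ X i :: q).
  apply: (@intr_inj rat); lra.
have Hn : run w th != None by rewrite Hw'.
have [p1 [j1 [q1 [Ew Hp1 Hq1 R1]]]] := cnt1 Hn E.
exists w; split => //.
subst w; exact: (core Hp1 Hq1 Hp Hq Hw' HD R1 R En).
Qed.
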